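(* Let $n\ge 2$ and let $V$ be an $n$-element subset of $\mathbb R$ that is optimal for $3$-term arithmetic progressions. Then at least one of the two $(n-1)$-element sets $V\setminus\{\min V\}$ and $V\setminus\{\max V\}$ is optimal for $3$-term arithmetic progressions.
   Context: A $k$-term arithmetic progression is a set $\{a,a+d,\dots,a+(k-1)d\}\subseteq\mathbb R$ with $d>0$; $S_{\mathcal A_k}(V)$ is the number of $k$-term arithmetic progressions contained in $V$. An $m$-set $V$ is optimal for $k$-term arithmetic progressions if $S_{\mathcal A_k}(V)$ equals the maximum of $S_{\mathcal A_k}(W)$ over all $m$-subsets $W\subseteq\mathbb R$, namely $(m-r)(m+r-k+1)/(2k-2)$ where $r$ is the remainder of $m$ modulo $k-1$. *)

(* Defs.v *)
(* Finite subsets of the reals are represented by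
   duplicate-free sequences over an arbitrary real field R. *)
From HB Require Import structures.
From mathcomp Require Import all_boot all_order all_algebra.
Set Implicit Arguments. Unset Strict Implicit. Unset Printing Implicit Defensive.
Import Order.TTheory GRing.Theory Num.Theory.
Local Open Scope ring_scope.

(* The k-term AP {a, a+d, ..., a+(k-1)d} (d > 0) contained in V is
   determined by its first two terms a < b := a + d, both in V.  Hence
   S_{A_k}(V) = number of pairs (a,b) of elements of V with a < b and
   a + i*(b-a) in V for all i < k (valid for k >= 2). *)
Definition is_kAP {R : realFieldType} (k : nat) (V : seq R) (a b : R) : bool :=
  (a < b) && all (fun i => a + (b - a) *+ i \in V) (iota 0 k).

Definition S_AP {R : realFieldType} (k : nat) (V : seq R) : nat :=
  size [seq p <- [seq (a, b) | a <- V, b <- V] | is_kAP k V p.1 p.2].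

Definition optimal_AP {R : realFieldType} (k : nat) (V : seq R) : Prop :=
  forall W : seq R, uniq W -> size W = size V -> (S_AP k W <= S_AP k V)%N.

Definition drop_min {R : realFieldType} (V : seq R) : seq R :=
  [seq x <- V | has (fun y => y < x) V].

Definition drop_max {R : realFieldType} (V : seq R) : seq R :=
  [seq x <- V | has (fun y => x < y) V].

(* Main.v *)
Require Import Defs.
From HB Require Import structures.
From mathcomp Require Import all_boot all_order all_algebra.
From mathcomp Require Import ring lra zify.
Set Implicit Arguments. Unset Strict Implicit. Unset Printing Implicit Defensive.
Import Order.TTheory GRing.Theory Num.Theory.
Local Open Scope ring_scope.

Section T.
Variable R : realFieldType.
Implicit Types V W : seq R.

Definition Tt V (a b : R) : nat := ((a < b) && (b *+ 2 - a \in V)).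
Definition T V : nat := (\sum_(a <- V) \sum_(b <- V) Tt V a b)%N.

Lemma count_sum (T0 : Type) (q : pred T0) s : count q s = (\sum_(x <- s) q x)%N.
Proof. by elim: s => [|x s IH]; rewrite ?big_nil ?big_cons //= IH. Qed.

Lemma count_allp (P : pred (R * R)) s t :
  count P [seq (a, b) | a <- s, b <- t] = (\sum_(a <- s) count (fun b => P (a, b)) t)%N.
Proof.
elim: s => [|a s IH]; rewrite ?big_nil ?big_cons //= count_cat IH count_map //.
Qed.

Lemma S_T V : S_AP 3 V = T V.
Proof.
rewrite /S_AP size_filter count_allp /T.
apply: eq_big_seq => a aV; rewrite count_sum; apply: eq_big_seq => b bV /=.
rewrite /is_kAP /Tt /= mulr0n addr0 mulr1n aV (addrC a) subrK bV /=.
have -> : a + (b - a) *+ 2 = b *+ 2 - a by rewrite !mulr2n; ring.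
by rewrite andbT.
Qed.

Lemma T_perm V W : perm_eq V W -> T V = T W.
Proof.
move=> pVW; rewrite /T (perm_big _ pVW); apply: eq_bigr => a _.
rewrite (perm_big _ pVW); apply: eq_bigr => b _.
by rewrite /Tt (perm_mem pVW).
Qed.


Definition em (x a b : R) : nat := (a < b) && (b *+ 2 - a == x).
Definition en V (y b : R) : nat := (y < b) && (b *+ 2 - y \in V).

Lemma Tmax x V : uniq (x :: V) -> (forall b, b \in V -> b < x) ->
  T (x :: V) = (T V + \sum_(a <- V) \sum_(b <- V) em x a b)%N.
Proof.
move=> /andP[xV uV] hV; rewrite /T big_cons.
have -> : (\sum_(b <- x :: V) Tt (x :: V) x b = 0)%N.
  apply: big1_seq => b /andP[_]; rewrite inE => /orP[/eqP-> | /hV bx];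
    by rewrite /Tt ?ltxx // lt_gtF.
rewrite add0n -big_split; apply: eq_big_seq => a aV; rewrite big_cons.
have -> : Tt (x :: V) a x = 0%N.
  rewrite /Tt hV //= inE.
  have h1 : x < x *+ 2 - a by have := hV a aV; rewrite mulr2n; lra.
  have -> : (x *+ 2 - a \in V) = false.
    by apply/negP => /hV; rewrite ltNge le_eqVlt h1 orbT.
  by rewrite gt_eqF.
rewrite add0n -big_split; apply: eq_big_seq => b bV.
rewrite /Tt /em inE; case: (a < b) => //=.
case E: (b *+ 2 - a == x) => //=.
by move/eqP: E => ->; rewrite (negbTE xV).
by rewrite addn0.
Qed.

Lemma Tmin y V : uniq (y :: V) -> (forall b, b \in V -> y < b) ->
  T (y :: V) = (T V + \sum_(b <- V) en V y b)%N.
Proof.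
move=> /andP[yV uV] hV; rewrite /T big_cons big_cons.
have -> : Tt (y :: V) y y = 0%N by rewrite /Tt ltxx.
rewrite add0n addnC; congr (_ + _)%N.
- apply: eq_big_seq => a aV; rewrite big_cons.
  have -> : Tt (y :: V) a y = 0%N by rewrite /Tt lt_gtF // hV.
  rewrite add0n; apply: eq_big_seq => b bV.
  rewrite /Tt inE; case ab: (a < b) => //=.
  have h1 : y < b *+ 2 - a by have := hV a aV; have := hV b bV; move: ab; rewrite mulr2n; lra.
  by rewrite eq_sym lt_eqF.
- apply: eq_big_seq => b bV; rewrite /Tt /en inE hV //=.
  have h1 : y < b *+ 2 - y by have := hV b bV; rewrite mulr2n; lra.
  by rewrite eq_sym lt_eqF.
Qed.


Lemma exists_max V : V != [::] -> exists2 x, x \in V & forall z, z \in V -> z <= x.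
Proof.
elim: V => [//|a s IH] _.
case: (eqVneq s [::]) => [->|/IH [x xs hx]].
  by exists a; rewrite ?mem_head // => z; rewrite inE => /eqP->.
case: (leP a x) => ax.
  exists x; first by rewrite inE xs orbT.
  by move=> z; rewrite inE => /orP[/eqP->|/hx].
exists a; first exact: mem_head.
move=> z; rewrite inE => /orP[/eqP->//|/hx zx]; exact: (le_trans zx (ltW ax)).
Qed.

Lemma exists_min V : V != [::] -> exists2 x, x \in V & forall z, z \in V -> x <= z.
Proof.
elim: V => [//|a s IH] _.
case: (eqVneq s [::]) => [->|/IH [x xs hx]].
  by exists a; rewrite ?mem_head // => z; rewrite inE => /eqP->.
case: (leP x a) => ax.
  exists x; first by rewrite inE xs orbT.
  by move=> z; rewrite inE => /orP[/eqP->|/hx].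
exists a; first exact: mem_head.
move=> z; rewrite inE => /orP[/eqP->//|/hx zx]; exact: (le_trans (ltW ax) zx).
Qed.

Lemma drop_max_perm V x : uniq V -> x \in V -> (forall z, z \in V -> z <= x) ->
  perm_eq V (x :: drop_max V) /\ (forall b, b \in drop_max V -> b < x).
Proof.
move=> uV xV hx; split.
  have -> : drop_max V = [seq z <- V | predC1 x z].
    apply: eq_in_filter => z zV /=.
    case: (eqVneq z x) => [->|nzx].
      by apply/negbTE/hasPn => w /hx; rewrite leNgt => /negbTE->.
    by apply/hasP; exists x => //; rewrite lt_neqAle nzx hx.
  by rewrite -rem_filter // perm_to_rem.
move=> b; rewrite mem_filter => /andP[/hasP[w wV bw] _].
exact: lt_le_trans bw (hx w wV).
Qed.

Lemma drop_min_perm V y : uniq V -> y \in V -> (forall z, z \in V -> y <= z) ->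
  perm_eq V (y :: drop_min V) /\ (forall b, b \in drop_min V -> y < b).
Proof.
move=> uV yV hy; split.
  have -> : drop_min V = [seq z <- V | predC1 y z].
    apply: eq_in_filter => z zV /=.
    case: (eqVneq z y) => [->|nzy].
      by apply/negbTE/hasPn => w /hy; rewrite leNgt => /negbTE->.
    by apply/hasP; exists y => //; rewrite lt_neqAle eq_sym nzy hy.
  by rewrite -rem_filter // perm_to_rem.
move=> b; rewrite mem_filter => /andP[/hasP[w wV bw] _].
exact: le_lt_trans (hy w wV) bw.
Qed.

Definition gx V (x b : R) : nat := (b < x) && (b *+ 2 - x \in V).
Definition hdef V (y b : R) : nat := (y < b) && (b *+ 2 - y \in V).

Lemma ends_bound V x y : uniq V -> x \in V -> y \in V -> y < x ->
  (forall z, z \in V -> y <= z <= x) ->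
  (\sum_(b <- V) gx V x b + \sum_(b <- V) hdef V y b + 2 <= size V + 1)%N.
Proof.
move=> uV xV yV yx hz.
have pw : forall b, b \in V ->
    (gx V x b + hdef V y b + (b == x) + (b == y) <= 1 + (b *+ 2 == x + y)%R)%N.
  move=> b bV; rewrite /gx /hdef.
  have memb : forall c, c \in V -> y <= c /\ c <= x by move=> c /hz /andP[].
  case: (eqVneq b x) => [-> | nbx].
    have -> : (x *+ 2 - y \in V) = false.
      by apply/negP => /memb [_]; rewrite mulr2n; lra.
    by rewrite ltxx andbF gt_eqF.
  case: (eqVneq b y) => [-> | nby].
    have -> : (y *+ 2 - x \in V) = false.
      by apply/negP => /memb [+ _]; rewrite mulr2n; lra.
    by rewrite ltxx andbF.
  have [yb bx] := memb b bV.
  have bx' : b < x by rewrite lt_neqAle nbx.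
  have yb' : y < b by rewrite lt_neqAle eq_sym nby.
  rewrite bx' yb' /=.
  case g1: (b *+ 2 - x \in V); case h1: (b *+ 2 - y \in V) => //=.
  have [g2 _] := memb _ g1; have [_ h2] := memb _ h1.
  have -> : b *+ 2 = x + y by apply/eqP; rewrite eq_le; apply/andP; split; move: g2 h2; rewrite mulr2n; lra.
  by rewrite eqxx.
have s1 : (\sum_(b <- V) (gx V x b + hdef V y b + (b == x) + (b == y))
    <= \sum_(b <- V) (1 + (b *+ 2 == x + y)%R))%N.
  by rewrite big_seq [X in (_ <= X)%N]big_seq; apply: leq_sum.
rewrite !big_split /= -!count_sum in s1.
rewrite /gx /hdef -!count_sum.
have c1 : count (pred1 x) V = 1%N by rewrite (count_uniq_mem _ uV) xV.
have c2 : count (pred1 y) V = 1%N by rewrite (count_uniq_mem _ uV) yV.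
have c3 : (count (fun b => (b *+ 2 == x + y)%R) V <= 1)%N.
  rewrite (@eq_count _ _ (pred1 ((x + y) / 2))); last first.
    move=> b /=; apply/eqP/eqP => [<-|->]; rewrite mulr2n.
      by field.
    by field.
  by rewrite (count_uniq_mem _ uV) leq_b1.
move: s1; rewrite c1 c2 sum1_size -addnA => s1.
exact: leq_trans s1 (leq_add (leqnn _) c3).
Qed.


Lemma decomp V : uniq V -> (2 <= size V)%N -> exists Emax Emin,
  [/\ T V = (T (drop_max V) + Emax)%N, T V = (T (drop_min V) + Emin)%N,
      (Emax + Emin <= (size V).-1)%N,
      size (drop_max V) = (size V).-1 /\ size (drop_min V) = (size V).-1
      & uniq (drop_max V) /\ uniq (drop_min V)].
Proof.
move=> uV sV.
have V0 : V != [::] by move: sV; case: (V).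
have [x xV hx] := exists_max V0; have [y yV hy] := exists_min V0.
have [pM ltM] := drop_max_perm uV xV hx; have [pm ltm] := drop_min_perm uV yV hy.
have uM : uniq (x :: drop_max V) by rewrite -(perm_uniq pM).
have um : uniq (y :: drop_min V) by rewrite -(perm_uniq pm).
set V1 := drop_max V in pM ltM uM *; set V2 := drop_min V in pm ltm um *.
have u1 : uniq V1 by case/andP: uM.
have u2 : uniq V2 by case/andP: um.
have sM : size V = (size V1).+1 by rewrite (perm_size pM).
have sm : size V = (size V2).+1 by rewrite (perm_size pm).
exists (\sum_(a <- V1) \sum_(b <- V1) em x a b)%N, (\sum_(b <- V2) en V2 y b)%N.
split.
- by rewrite (T_perm pM) Tmax.
- by rewrite (T_perm pm) Tmin.
- have [z zV1] : exists z, z \in V1.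
    exists (nth 0 V1 0); apply: mem_nth; move: sV; by rewrite sM.
  have yx : y < x.
    have zV : z \in V by rewrite (perm_mem pM) inE zV1 orbT.
    exact: le_lt_trans (hy z zV) (ltM z zV1).
  have := ends_bound uV xV yV yx (fun z zV => andb_true_intro (conj (hy z zV) (hx z zV))).
  have b1 : (\sum_(a <- V1) \sum_(b <- V1) em x a b <= \sum_(b <- V) gx V x b)%N.
    rewrite exchange_big /= (perm_big _ pM) big_cons /=.
    apply: leq_trans (leq_addl _ _).
    rewrite big_seq [X in (_ <= X)%N]big_seq; apply: leq_sum => b bV1.
    set c := b *+ 2 - x.
    apply: (@leq_trans (\sum_(a <- V1) (a == c))%N).
      apply: leq_sum => a _; rewrite /em.
      case: (a < b) => //=; case E: (b *+ 2 - a == x) => //=.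
      suff -> : a == c by [].
      apply/eqP; move/eqP: E; rewrite /c => <-; rewrite !mulr2n; ring.
    rewrite -(count_sum (pred1 c)) (count_uniq_mem _ u1) /gx ltM //=.
    case cV1: (c \in V1) => //.
    by rewrite (perm_mem pM) inE cV1 orbT.
  have b2 : (\sum_(b <- V2) en V2 y b <= \sum_(b <- V) hdef V y b)%N.
    rewrite (perm_big _ pm) big_cons /=.
    apply: leq_trans (leq_addl _ _).
    rewrite big_seq [X in (_ <= X)%N]big_seq; apply: leq_sum => b bV2.
    rewrite /en /hdef; case: (y < b) => //=.
    case cV2: (b *+ 2 - y \in V2) => //.
    by rewrite (perm_mem pm) inE cV2 orbT.
  move: b1 b2; lia.
- by split; [rewrite sM | rewrite sm].
- by split.
Qed.


Fixpoint f (m : nat) : nat := if m is k.+1 then (f k + k./2)%N else 0%N.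

Lemma half_fact k : (k./2 + k./2 + odd k)%N = k.
Proof. by rewrite addnn addnC odd_double_half. Qed.

Lemma upper m W : uniq W -> size W = m -> (T W <= f m)%N.
Proof.
elim: m W => [|k IH] W uW sW.
  by case: W uW sW => // _ _; rewrite /T big_nil.
case: k IH sW => [|k] IH sW.
  case: W uW sW => [|w [|]] //= _ _.
  by rewrite /T !big_cons !big_nil /Tt ltxx.
have [Emax [Emin [e1 e2 e3 [s1 s2] [u1 u2]]]] := decomp uW (ltac:(by rewrite sW)).
rewrite sW /= in e3 s1 s2.
have hk := half_fact k.+1.
have [hM|hM] := leqP Emax k.+1./2.
  by rewrite e1 /=; apply: leq_add => //; exact: IH.
have hm : (Emin <= k.+1./2)%N by lia.
by rewrite e2 /=; apply: leq_add => //; exact: IH.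
Qed.

Definition Wm (m : nat) : seq R := [seq - (i%:R) | i <- iota 0 m].

Lemma Wm_uniq m : uniq (Wm m).
Proof.
rewrite map_inj_uniq ?iota_uniq // => i j /eqP; rewrite eqr_opp eqr_nat => /eqP.
done.
Qed.

Lemma count_half m : count (fun i => m <= i.*2)%N (iota 0 m) = m./2.
Proof.
have hm : m = (uphalf m + m./2)%N by rewrite uphalf_half; have := half_fact m; lia.
rewrite [in iota 0 m]hm iotaD count_cat add0n.
rewrite (@eq_in_count _ _ pred0); last first.
  move=> i; rewrite mem_iota /= -leq_uphalf_double => h; apply/negbTE; rewrite -ltnNge; lia.
rewrite [X in (_ + X)%N](@eq_in_count _ _ predT); last first.
  move=> i; rewrite mem_iota /= -leq_uphalf_double => h; lia.
by rewrite count_pred0 count_predT size_iota.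
Qed.

Lemma lower m : (f m <= T (Wm m))%N.
Proof.
elim: m => [|m IH] //=.
have -> : Wm m.+1 = rcons (Wm m) (- m%:R).
  by rewrite /Wm -addn1 iotaD map_cat cats1 add0n.
have hlt : forall b, b \in Wm m -> - (m%:R) < b.
  move=> b /mapP[i]; rewrite mem_iota add0n => /andP[_ im] ->.
  by rewrite ltrN2 ltr_nat.
have pr : perm_eq (rcons (Wm m) (- m%:R)) (- m%:R :: Wm m) by rewrite perm_rcons perm_refl.
rewrite (T_perm pr) Tmin //; last first.
  rewrite /= Wm_uniq andbT; apply/negP => /hlt; rewrite ltxx //.
apply: leq_add => //.
rewrite -(count_half m) count_sum /Wm big_map.
rewrite big_seq [X in (_ <= X)%N]big_seq; apply: leq_sum => i.
rewrite mem_iota add0n => /andP[_ im].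
case h: (m <= i.*2)%N => //.
rewrite /en ltrN2 ltr_nat im /=.
suff -> : ((- i%:R) *+ 2 - - m%:R \in Wm m) by [].
apply/mapP; exists (i.*2 - m)%N; first by rewrite mem_iota; lia.
by rewrite natrB // -addnn natrD !mulr2n; ring.
Qed.

End T.

Unset Implicit Arguments.
Set Strict Implicit.

Theorem mainTheorem9 (R : realFieldType) (n : nat) (V : seq R) :
  (2 <= n)%N -> uniq V -> size V = n -> optimal_AP 3 V ->
  optimal_AP 3 (drop_min V) \/ optimal_AP 3 (drop_max V).
Proof.
move=> n2 uV sV opt.
have lo : (f n <= T V)%N.
  apply: leq_trans (lower R n) _; rewrite -!S_T; apply: opt.
    exact: Wm_uniq.
  by rewrite size_map size_iota sV.
have [Emax [Emin [e1 e2 e3 [s1 s2] [u1 u2]]]] := decomp uV (ltac:(by rewrite sV)).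
case: n n2 sV lo => [//|k] _ sV lo.
rewrite sV /= in e3 s1 s2 lo.
have hk := half_fact k.
have [hM|hM] := leqP Emax k./2.
  right => W uW sW; rewrite !S_T; apply: leq_trans (upper uW (etrans sW s1)) _.
  lia.
left => W uW sW; rewrite !S_T; apply: leq_trans (upper uW (etrans sW s2)) _.
lia.
Qed.
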